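(* Let $q=2^s$, $s\ge1$, and let $C_2\subseteq C_1\subseteq\mathbb F_q^n$ be $\mathbb F_q$-linear codes forming a $q$-ary CSS-$T$ pair. Then the binary code $\mathrm{tr}(C_2)\subseteq\mathbb F_2^n$ is self-orthogonal, i.e. $\mathrm{tr}(C_2)\subseteq\mathrm{tr}(C_2)^\perp$.
   Context: Let $q=2^s$ and $\mathrm{tr}:\mathbb F_q\to\mathbb F_2$, $\mathrm{tr}(x)=\sum_{i=0}^{s-1}x^{2^i}$, the absolute trace; for $c\in\mathbb F_q^n$, $\mathrm{tr}(c)=(\mathrm{tr}(c_1),\dots,\mathrm{tr}(c_n))$, and for a linear code $C$, $\mathrm{tr}(C)=\{\mathrm{tr}(c):c\in C\}\subseteq\mathbb F_2^n$. $^\perp$ is the dual for the standard inner product. Let $\mathcal H=\mathbb C^q$ with orthonormal basis $\{|x\rangle:x\in\mathbb F_q\}$ and $\mathcal H^{\otimes n}$ with basis $|x\rangle=|x_1\rangle\otimes\cdots\otimes|x_n\rangle$, $x\in\mathbb F_q^n$. For $\lambda\in\mathbb F_q$, $T^{(\lambda)}=\sum_{x\in\mathbb F_q}e^{i\pi\,\mathrm{tr}(\lambda x)/4}|x\rangle\langle x|$, where $\mathrm{tr}(\lambda x)\in\{0,1\}$ is regarded as an integer; $T=T^{(1)}$. For $\mathbb F_q$-linear codes $C_2\subseteq C_1\subseteq\mathbb F_q^n$, the CSS code $\mathrm{CSS}(C_1,C_2)\subseteq\mathcal H^{\otimes n}$ is the complex linear span of the states $|w+C_2\rangle=|C_2|^{-1/2}\sum_{c\in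 C_2}|w+c\rangle$ for $w\in C_1$. The pair $(C_1,C_2)$ is a $q$-ary CSS-$T$ pair if $(T^{(\lambda)})^{\otimes n}$ maps $\mathrm{CSS}(C_1,C_2)$ into itself for every $\lambda\in\mathbb F_q$. *)

(* Defs.v *)
From HB Require Import structures.
From mathcomp Require Import all_boot all_order all_algebra all_field.
Set Implicit Arguments. Unset Strict Implicit. Unset Printing Implicit Defensive.
Import Order.TTheory GRing.Theory Num.Theory.
Local Open Scope ring_scope.

(* absolute trace F_q -> F_q (lands in the prime field {0,1}), q = 2^s *)
Definition abs_trace (F : finFieldType) (s : nat) (x : F) : F :=
  \sum_(i < s) x ^+ (2 ^ i).

(* tr(x) regarded as an integer in {0,1} *)
Definition trn (F : finFieldType) (s : nat) (x : F) : nat :=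
  (abs_trace s x == 1).

Definition trb (F : finFieldType) (s : nat) (x : F) : 'F_2 := (trn s x)%:R.

Definition tr_vec (F : finFieldType) (s n : nat) (c : 'rV[F]_n) : 'rV['F_2]_n :=
  \row_i trb s (c 0 i).

Definition tr_code (F : finFieldType) (s n : nat) (C : {vspace 'rV[F]_n}) :
  pred 'rV['F_2]_n :=
  [pred b | [exists c : 'rV[F]_n, (c \in C) && (b == tr_vec s c)]].

Definition dual2 (n : nat) (D : pred 'rV['F_2]_n) : pred 'rV['F_2]_n :=
  [pred x : 'rV['F_2]_n | [forall y : 'rV['F_2]_n, (y \in D) ==> (\sum_(i < n) x 0 i * y 0 i == 0)]].

(* e^{i pi/4}: the 4th root of -1 with minimal nonnegative argument *)
Definition omega8 : algC := 4.-root (-1).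

(* H^{(x) n} = functions F_q^n -> C, basis kets |x> *)
Definition ket (F : finFieldType) (n : nat) (x : 'rV[F]_n) : {ffun 'rV[F]_n -> algC} :=
  [ffun y => (y == x)%:R].

Definition css_ket (F : finFieldType) (n : nat) (C2 : {vspace 'rV[F]_n})
  (w : 'rV[F]_n) : {ffun 'rV[F]_n -> algC} :=
  [ffun y => (sqrtC (#|[pred c : 'rV[F]_n | c \in C2]|%:R))^-1 *
    \sum_(c : 'rV[F]_n | c \in C2) ket (w + c) y].

Definition in_CSS (F : finFieldType) (n : nat) (C1 C2 : {vspace 'rV[F]_n})
  (psi : {ffun 'rV[F]_n -> algC}) : Prop :=
  exists a : 'rV[F]_n -> algC,
    psi = [ffun y => \sum_(w : 'rV[F]_n | w \in C1) a w * css_ket C2 w y].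

(* (T^(lambda))^{(x) n} acting on H^{(x) n}: diagonal with phase
   prod_i e^{i pi tr(lambda x_i)/4} on |x> *)
Definition Tn (F : finFieldType) (s n : nat) (lam : F)
  (psi : {ffun 'rV[F]_n -> algC}) : {ffun 'rV[F]_n -> algC} :=
  [ffun x : 'rV[F]_n => (\prod_(i < n) omega8 ^+ trn s (lam * x 0 i)) * psi x].

(* q-ary CSS-T pair (C2 <= C1 assumed separately) *)
Definition css_T_pair (F : finFieldType) (s n : nat) (C1 C2 : {vspace 'rV[F]_n}) : Prop :=
  forall (lam : F) (psi : {ffun 'rV[F]_n -> algC}),
    in_CSS C1 C2 psi -> in_CSS C1 C2 (Tn s lam psi).

(* Main.v *)
Require Import Defs.
From HB Require Import structures.
From mathcomp Require Import all_boot all_order all_algebra all_field.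
From mathcomp Require Import zify.
Set Implicit Arguments. Unset Strict Implicit. Unset Printing Implicit Defensive.
Import Order.TTheory GRing.Theory Num.Theory.
Local Open Scope ring_scope.

Section Tr.
Variables (F : finFieldType) (s : nat).
Hypothesis s0 : (0 < s)%N.
Hypothesis cardF : #|F| = (2 ^ s)%N.

Lemma two0 : (2%:R : F) = 0.
Proof. have h := card_finPcharP cardF (isT : prime 2). exact: pcharf0 h. Qed.

Lemma sqrD (x y : F) : (x + y) ^+ 2 = x ^+ 2 + y ^+ 2.
Proof. by rewrite sqrrD -mulr_natr two0 mulr0 addr0. Qed.

Lemma powD (x y : F) i : (x + y) ^+ (2 ^ i) = x ^+ (2 ^ i) + y ^+ (2 ^ i).
Proof.
elim: i => [|i IH]; first by rewrite !expr1.
by rewrite expnSr !exprM IH sqrD.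
Qed.

Lemma trD (x y : F) : abs_trace s (x + y) = abs_trace s x + abs_trace s y.
Proof. by rewrite /abs_trace -big_split; apply: eq_bigr => i _; rewrite powD. Qed.

Lemma sqr_sum (I : Type) (r : seq I) (f : I -> F) : (\sum_(i <- r) f i) ^+ 2 = \sum_(i <- r) f i ^+ 2.
Proof.
elim: r => [|a r IH]; first by rewrite !big_nil expr0n.
by rewrite !big_cons sqrD IH.
Qed.

Lemma tr_idem (x : F) : abs_trace s x ^+ 2 = abs_trace s x.
Proof.
rewrite /abs_trace sqr_sum.
case: s s0 cardF => // s' _ cF.
rewrite big_ord_recr big_ord_recl /=.
have -> : x ^+ (2 ^ s') ^+ 2 = x by rewrite -exprM -expnSr -cF expf_card.
rewrite addrC; congr (_ + _).
by apply: eq_bigr => i _; rewrite -exprM -expnSr /bump /= add1n.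
Qed.

Lemma tr01 (x : F) : abs_trace s x = 0 \/ abs_trace s x = 1.
Proof.
have h := tr_idem x.
have : abs_trace s x * (abs_trace s x - 1) = 0 by rewrite mulrBr mulr1 -expr2 h subrr.
move/eqP; rewrite mulf_eq0 subr_eq0 => /orP[] /eqP; tauto.
Qed.

Lemma one_neq0 : (1 : F) != 0. Proof. exact: oner_neq0. Qed.

Lemma trnD (x y : F) : (trn s (x + y)%R + 2 * (trn s x * trn s y) = trn s x + trn s y)%N.
Proof.
rewrite /trn trD.
have h10 : (1 : F) != 0 := oner_neq0 _.
have h01 : (0 : F) != 1 by rewrite eq_sym.
have h11 : (1 + 1 : F) = 0 by rewrite -two0.
case: (tr01 x) => ->; case: (tr01 y) => ->;
  rewrite ?addr0 ?add0r ?h11 ?eqxx ?(negbTE h01) //.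
Qed.

Lemma trn0 : trn s (0 : F) = 0%N.
Proof.
rewrite /trn /abs_trace big1 ?(negbTE (eq_sym _ _ )) //; last by move=> i _; rewrite expr0n expn_eq0.
by rewrite eq_sym oner_eq0.
Qed.
End Tr.
Lemma om4 : omega8 ^+ 4 = -1.
Proof. exact: (rootCK (isT : (0 < 4)%N) (-1)). Qed.

Lemma om_dvd m : omega8 ^+ m = 1 -> (4 %| m)%N.
Proof.
have hneq : (-1 : algC) != 1 by rewrite eq_sym -subr_eq0 opprK -mulr2n pnatr_eq0.
move=> h.
have h2 : omega8 ^+ (2 * (m %% 4)) = 1.
  move: h; rewrite {1}(divn_eq m 4) exprD mulnC exprM om4 => h.
  have := congr1 (fun z => z ^+ 2) h.
  move=> /= h0; rewrite expr1n in h0; rewrite -h0.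
  have s1 : ((-1 : algC) ^+ (m %/ 4)%N) ^+ 2 = 1 by rewrite -exprM mulnC exprM sqrrN !expr1n.
  by rewrite exprMn s1 mul1r -exprM mulnC.
have h8 : omega8 ^+ 8 = 1 by rewrite (exprM _ 4 2) om4 sqrrN expr1n.
have : (m %% 4 < 4)%N by rewrite ltn_mod.
rewrite /dvdn; move: h2; case: (m %% 4)%N => [//|[|[|[|//]]]] /= h2 _.
- by move: hneq; rewrite -om4 (exprM _ 2 2) h2 expr1n eqxx.
- by move: hneq; rewrite -om4 h2 eqxx.
- move: hneq; rewrite -om4 -h8 (exprD _ 6 2) h2 mul1r (exprM _ 2 2).
  have -> : omega8 ^+ 2 = 1.
    by apply: (mulIf (x := omega8 ^+ 6)); [rewrite h2 oner_eq0 | rewrite -exprD h2 mul1r].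
  by rewrite expr1n eqxx.
Qed.

Lemma shift (F : finFieldType) n (C2 : {vspace 'rV[F]_n}) w y :
  y \in C2 -> css_ket C2 w y = css_ket C2 w 0.
Proof.
move=> hy; rewrite !ffunE; congr (_ * _).
rewrite (reindex_inj (addIr y)) /=; apply: eq_big => c.
  by rewrite rpredDr.
move=> _; rewrite !ffunE addrA -{1}(add0r y) (inj_eq (addIr y)).
by [].
Qed.

Theorem mainTheorem6 (F : finFieldType) (s n : nat) (C1 C2 : {vspace 'rV[F]_n}) :
  (0 < s)%N -> #|F| = (2 ^ s)%N -> (C2 <= C1)%VS -> css_T_pair s C1 C2 ->
  forall b : 'rV['F_2]_n, b \in tr_code s C2 -> b \in dual2 (tr_code s C2).
Proof.
move=> s0 cF sub12 cssT.
have hW : forall c, c \in C2 -> (4 %| \sum_(i < n) trn s (c 0%R i))%N.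
  move=> c hc.
  set psi := css_ket C2 0.
  have Hin : in_CSS C1 C2 psi.
    exists (fun w => (w == 0)%:R); apply/ffunP => y; rewrite [RHS]ffunE.
    rewrite (bigD1 0) ?mem0v //= eqxx mul1r big1 ?addr0 //.
    by move=> w /andP[_ /negbTE ->]; rewrite mul0r.
  have [a Ha] := cssT 1 psi Hin.
  have psi0 : psi 0 != 0.
    rewrite /psi ffunE.
    under eq_bigr => c' _ do rewrite add0r.
    rewrite (bigD1 0) ?mem0v //= ffunE eqxx big1 ?addr0.
      rewrite mulr1 invr_eq0 sqrtC_eq0 pnatr_eq0 -lt0n.
      by apply/card_gt0P; exists 0; rewrite inE mem0v.
    by move=> c' /andP[_ hc']; rewrite ffunE eq_sym (negbTE hc').
  have E : Tn s 1 psi c = Tn s 1 psi 0.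
    by rewrite Ha !ffunE; apply: eq_bigr => w _; rewrite (shift w hc).
  have psic : psi c = psi 0 := shift 0 hc.
  clearbody psi.
  move: E; rewrite /Tn !ffunE psic => /(mulIf psi0).
  rewrite [X in _ = X]big1; last by move=> i _; rewrite !mxE mulr0 trn0.
  rewrite prodrXr => /om_dvd.
  by under eq_bigr => i _ do rewrite mul1r.
move=> b /existsP[c /andP[hc /eqP->]]; apply/forallP => y.
apply/implyP => /existsP[d /andP[hd /eqP->]].
rewrite (eq_bigr (fun i => ((trn s (c 0%R i) * trn s (d 0%R i))%N)%:R)); last first.
  by move=> i _; rewrite !mxE natrM.
rewrite -natr_sum.
have key : (\sum_(i < n) trn s ((c + d)%R 0%R i) + 2 * \sum_(i < n) (trn s (c 0%R i) * trn s (d 0%R i))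
   = \sum_(i < n) trn s (c 0%R i) + \sum_(i < n) trn s (d 0%R i))%N.
  rewrite big_distrr -!big_split /=; apply: eq_bigr => i _; by rewrite mxE (trnD s0 cF).
have h1 := hW c hc; have h2 := hW d hd; have h3 := hW (c + d) (memvD hc hd).
have : (2 %| \sum_(i < n) (trn s (c 0%R i) * trn s (d 0%R i)))%N.
  move: key h1 h2 h3.
  set P := (\sum_(i < n) _ * _)%N; set A := (\sum_(i < n) trn s ((c+d)%R 0%R i))%N.
  set B := (\sum_(i < n) trn s (c 0%R i))%N; set D := (\sum_(i < n) trn s (d 0%R i))%N.
  move=> key /dvdnP[x hx] /dvdnP[z hz] /dvdnP[u hu].
  apply/dvdnP; exists (x + z - u)%N; lia.
case/dvdnP => k ->; by rewrite natrM (pcharf0 (pchar_Fp (isT : prime 2))) mulr0.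
Qed.
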